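(* There exist universal constants $0<c\le C$ such that the following holds. Let $\mathcal{X}$ be a nonempty set, $\mathcal{Y}$ a finite set with $k=|\mathcal{Y}|\ge 2$, let $\mathcal{H}\subseteq\mathcal{Y}^{\mathcal{X}}$ be the class of all constant functions, and let $r\ge 0$ be an integer. Then \[ c(k+r)\le \mathsf{opt}_{\operatorname{bandit}}^{\operatorname{obl}}(\mathcal{H},r)\le C(k+r). \]
   Context: $\mathsf{opt}_{\operatorname{bandit}}^{\operatorname{obl}}(\mathcal{H},r)$ denotes $\mathsf{opt}_{\operatorname{bandit}}^{\operatorname{obl}}(\mathcal{P}_r)$, where $\mathcal{P}_r$ is the set of finite sequences of examples $(x,y)\in\mathcal{X}\times\mathcal{Y}$ for which some $h\in\mathcal{H}$ satisfies $h(x)\neq y$ for at most $r$ of the examples. For a set $\mathcal{P}$ of finite sequences of examples, $\mathsf{opt}_{\operatorname{bandit}}^{\operatorname{obl}}(\mathcal{P})=\inf_{\text{learner}}\sup_{S\in\mathcal{P}}$ of the expected number of mistakes of the learner on $S$ under bandit feedback: in round $t$ the learner receives the instance $x_t$ of $S$, draws a prediction $\hat y_t$ from a distribution depending on past observations and $x_t$, and observes only whether $\hat y_t$ equals the label $y_t$ of $S$; a mistake is $\hat y_t\ne y_t$. *)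

(* Defs.v *)
From HB Require Import structures.
From mathcomp Require Import all_boot all_order all_algebra.
From mathcomp Require Import all_classical reals constructive_ereal ereal Rstruct.
Set Implicit Arguments. Unset Strict Implicit. Unset Printing Implicit Defensive.
Import Order.TTheory GRing.Theory Num.Theory.
Local Open Scope ring_scope.
Local Open Scope classical_set_scope.

Notation R := Rdefinitions.R.

(* An example is a pair (x, y). A history entry records an instance,
   the learner's prediction, and the bandit feedback bit (prediction == label). *)
Definition history (X : Type) (Y : finType) := seq (X * Y * bool).

(* A randomized learner: given the history of past observations (most recent
   first) and the current instance, a distribution on Y. *)
Definition learner (X : Type) (Y : finType) :=
  history X Y -> X -> {ffun Y -> R}.

Definition is_distr (Y : finType) (p : {ffun Y -> R}) : Prop :=
  (forall y, 0 <= p y) /\ \sum_(y : Y) p y = 1.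

Definition valid_learner (X : Type) (Y : finType) (L : learner X Y) : Prop :=
  forall h x, is_distr (L h x).

Fixpoint exp_mistakes (X : Type) (Y : finType) (L : learner X Y)
    (h : history X Y) (S : seq (X * Y)) : R :=
  match S with
  | [::] => 0
  | (x, y) :: S' =>
      \sum_(yh : Y) L h x yh *
        ((yh != y)%:R + exp_mistakes L ((x, yh, yh == y) :: h) S')
  end.

Definition opt_bandit_obl (X : Type) (Y : finType) (P : set (seq (X * Y)))
  : \bar R :=
  ereal_inf [set ereal_sup [set (exp_mistakes L [::] S)%:E | S in P]
            | L in [set L : learner X Y | valid_learner L]].

Definition P_r (X : Type) (Y : finType) (H : set (X -> Y)) (r : nat)
  : set (seq (X * Y)) :=
  [set S | exists2 f, H f & (count (fun e => f e.1 != e.2) S <= r)%N].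

Definition opt_bandit_obl_H (X : Type) (Y : finType) (H : set (X -> Y))
  (r : nat) : \bar R := opt_bandit_obl (P_r H r).

Definition const_class (X : Type) (Y : finType) : set (X -> Y) :=
  [set f | exists y0 : Y, f = fun _ => y0].

(* Main.v *)
Require Import Defs.
From HB Require Import structures.
From mathcomp Require Import all_boot all_order all_algebra.
From mathcomp Require Import all_classical reals constructive_ereal ereal Rstruct.
Import Order.TTheory GRing.Theory Num.Theory.
Local Open Scope ring_scope.
From mathcomp Require Import zify lra ring.

Section Up.
Variables (X : Type) (Y : finType).
Local Notation k := #|Y|.

Definition step (s : option (Y * nat)) (yh : Y) (b : bool) : option (Y * nat) :=
  match s with
  | None => if b then Some (yh, k) else None
  | Some (y, c) => if b then Some (y, c.+1) else
                   if c is c'.+1 then Some (y, c') else None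
  end.

Fixpoint state (h : history X Y) : option (Y * nat) :=
  match h with
  | [::] => None
  | (x, yh, b) :: h' => step (state h') yh b
  end.

Definition alg : learner X Y := fun h x =>
  match state h with
  | None => [ffun _ => k%:R^-1]
  | Some (y, _) => [ffun z => (z == y)%:R]
  end.

Lemma alg_valid : (0 < k)%N -> valid_learner alg.
Proof.
move=> k0 h x; rewrite /alg; case: (state h) => [[y c]|]; split.
- by move=> z; rewrite ffunE ler0n.
- rewrite (bigD1 y) //= ffunE eqxx big1 ?addr0 // => z zy.
  by rewrite ffunE (negbTE zy).
- by move=> z; rewrite ffunE invr_ge0 ler0n.
- under eq_bigr do rewrite ffunE.
  rewrite sumr_const (_ : #|xpredT| = #|Y|) // -(mulr_natr (#|Y|%:R^-1)) mulVf // pnatr_eq0 -lt0n //.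
Qed.

Definition Vn (y0 : Y) (s : option (Y * nat)) : nat :=
  match s with
  | None => k.+1
  | Some (y, c) => if y == y0 then (k - c)%N else (k + 2 + c)%N
  end.

Lemma pointmass_sum (y : Y) (F : Y -> R) :
  \sum_(z : Y) [ffun z => (z == y)%:R] z * F z = F y.
Proof.
rewrite (bigD1 y) //= ffunE eqxx mul1r big1 ?addr0 // => z zy.
by rewrite ffunE (negbTE zy) mul0r.
Qed.

Lemma alg_bound (y0 : Y) (S : seq (X * Y)) (h : history X Y) :
  (0 < k)%N ->
  exp_mistakes alg h S <=
  (Vn y0 (state h) + 2 * count (fun e => y0 != e.2) S)%:R.
Proof.
move=> k0; elim: S h => [|[x l] S IH] h /=; first by rewrite ler0n.
set c' := count _ S.
have IH' : forall yh, exp_mistakes alg ((x, yh, yh == l) :: h) S <=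
   (Vn y0 (step (state h) yh (yh == l)) + 2 * c')%:R by move=> yh; exact: IH.
rewrite {1}/alg; case E: (state h) => [[y c]|].
- rewrite pointmass_sum.
  apply: le_trans (lerD (lexx _) (IH' y)) _.
  rewrite -natrD ler_nat E /=.
  have [yl|yl] := eqVneq y l; have [yy0|yy0] := eqVneq y y0; have [ly0|ly0] := eqVneq y0 l;
  subst => //=; rewrite ?eqxx ?(negbTE yy0) ?(negbTE yl) ?(negbTE ly0) //=;
  try (case: c E => [|c] E /=); rewrite ?eqxx ?(negbTE yy0) ?(negbTE yl) ?(negbTE ly0) //=; try lia.
  all: try by rewrite eqxx in ly0.
  all: try by rewrite eqxx in yl.
  all: try by rewrite eq_sym ly0 in yy0.
  under eq_bigr do rewrite ffunE.
  apply: (@le_trans _ _ (\sum_i #|Y|%:R^-1 *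
     (((i != l) + Vn y0 (step None i (i == l)) + 2 * c')%:R : R))).
    apply: ler_sum => i _; apply: ler_wpM2l; first by rewrite invr_ge0 ler0n.
    rewrite -addnA natrD lerD //; rewrite -E; exact: IH'.
  rewrite -mulr_sumr -natr_sum ler_pdivrMl ?ltr0n // -natrM ler_nat.
  rewrite (bigD1 l) //= eqxx.
  rewrite (eq_bigr (fun _ => (1 + k.+1 + 2 * c')%N)); last first.
    by move=> i /negbTE ->.
  rewrite sum_nat_const cardC1.
  case: (y0 =P l) => [->|/eqP yl]; rewrite /Vn; [rewrite eqxx | rewrite eq_sym (negbTE yl)]; move: k0; case: #|Y| => // k1 _ /=; nia.
Qed.
End Up.


Section Low.
Variables (X : Type) (Y : finType) (L : learner X Y).
Hypothesis HL : valid_learner L.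
Local Notation k := #|Y|.

Lemma exp_ge0 S h : 0 <= exp_mistakes L h S.
Proof.
elim: S h => [|[x y] S IH] h /=; first by [].
apply: sumr_ge0 => yh _; apply: mulr_ge0; first by case: (HL h x).
by apply: addr_ge0; [rewrite ler0n | exact: IH].
Qed.

Lemma lb_const (x0 : X) n : forall h (A : {set Y}),
  n%:R * (k%:R - #|A|%:R - n%:R) <=
  \sum_(y in ~: A) exp_mistakes L h (nseq n (x0, y)).
Proof.
elim: n => [|n IH] h A.
  by rewrite mul0r big1.
have Hy : forall y, exp_mistakes L h (nseq n.+1 (x0,y)) =
   \sum_yh L h x0 yh * ((yh != y)%:R +
        exp_mistakes L ((x0,yh,yh==y)::h) (nseq n (x0,y))) by [].
rewrite (eq_bigr _ (fun y _ => Hy y)).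
rewrite exchange_big /=.
set B := _ * _.
apply: (@le_trans _ _ (\sum_yh L h x0 yh * B)).
  by rewrite -mulr_suml (proj2 (HL h x0)) mul1r.
apply: ler_sum => yh _; rewrite -mulr_sumr; apply: ler_wpM2l; first by case: (HL h x0).
set A' := yh |: A.
rewrite (big_setID (~: A')).
have -> : ~: A :&: ~: A' = ~: A' by apply/setP => y; rewrite /A' !inE; case: (y == yh); case: (y \in A).
have H2 : 0 <= \sum_(i in ~: A :\: ~: A')
      ((yh != i)%:R + exp_mistakes L ((x0, yh, yh == i) :: h) (nseq n (x0, i))).
  by apply: sumr_ge0 => y _; apply: addr_ge0; [rewrite ler0n | exact: exp_ge0].
rewrite (eq_bigr (fun y => 1 + exp_mistakes L ((x0, yh, false) :: h) (nseq n (x0, y)))); last first.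
  move=> y; rewrite finset.in_setC finset.in_setU1 negb_or => /andP [yy _].
  by rewrite eq_sym yy /= (negbTE yy).
rewrite big_split /= sumr_const.
have IH' := IH ((x0, yh, false) :: h) A'.
have HC := cardsC A'.
have HU : (#|A'| <= #|A|.+1)%N by rewrite /A' cardsU1; case: (yh \notin A).
move: IH' H2.
set E := \sum_(i in ~: A') _.
set F := \sum_(i in _ :\: _) _.
rewrite -mulr_natr mul1r.
move: HC HU; set a' := #|A'|; set m' := #|~: A'|; set a := #|A|.
move=> HC HU IH' H2.
have HC' : a'%:R + m'%:R = k%:R :> R by rewrite -natrD HC.
have HU' : a'%:R <= a%:R + 1 :> R by rewrite natr1 ler_nat.
have n0 : 0 <= n%:R :> R by rewrite ler0n.
rewrite /B -natr1 -/a.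
have : 0 <= (n%:R + 1) * (a%:R + 1 - a'%:R) :> R by apply: mulr_ge0; lra.
nra.
Qed.

Fixpoint allseqs n : seq (seq Y) :=
  if n is n'.+1 then flatten [seq [seq y :: s | s <- allseqs n'] | y <- enum Y]
  else [:: [::]].

Lemma big_allseqs (F : seq Y -> R) n :
  \sum_(s <- allseqs n.+1) F s = \sum_(y : Y) \sum_(s <- allseqs n) F (y :: s).
Proof.
rewrite /= big_flatten big_map big_enum /=.
by apply: eq_bigr => y _; rewrite big_map.
Qed.

Lemma sum1_size (T : Type) (r : seq T) : \sum_(s <- r) (1:R) = (size r)%:R.
Proof.
elim: r => [|x r IH]; first by rewrite big_nil.
by rewrite big_cons IH /= -natr1 addrC.
Qed.

Lemma count1 n : \sum_(s <- allseqs n) (1:R) = k%:R ^+ n.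
Proof.
elim: n => [|n IH]; first by rewrite big_seq1.
rewrite big_allseqs; under eq_bigr do rewrite IH.
by rewrite sumr_const exprS (_ : #|xpredT| = #|Y|) // -(mulr_natl (#|Y|%:R ^+ n)) mulrC.
Qed.

Lemma sum_const_seq (c : R) n : \sum_(s <- allseqs n) c = c * k%:R ^+ n.
Proof. by rewrite -count1 mulr_sumr; under [RHS]eq_bigr do rewrite mulr1. Qed.

Hypothesis k0 : (0 < k)%N.

Lemma sum_neq yh : \sum_(y : Y) ((yh != y)%:R : R) = k%:R - 1.
Proof.
rewrite (bigD1 yh) //= eqxx add0r.
rewrite (eq_bigr (fun _ => 1)); last by move=> y yy; rewrite eq_sym yy.
rewrite sumr_const.
have -> : #|[pred i | i != yh]| = #|predC1 yh| by apply: eq_card.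
by rewrite cardC1 -(prednK k0) -natr1 addrK.
Qed.

Lemma lb_all (x0 : X) n : forall h,
  \sum_(s <- allseqs n) exp_mistakes L h [seq (x0, y) | y <- s] =
  n%:R * (k%:R - 1) * k%:R ^+ n / k%:R.
Proof.
have kR : k%:R != 0 :> R by rewrite pnatr_eq0 -lt0n.
elim: n => [|n IH] h.
  by rewrite big_seq1 /= !mul0r.
rewrite big_allseqs.
have step : forall y s, exp_mistakes L h [seq (x0, z) | z <- y :: s] =
  \sum_yh L h x0 yh * ((yh != y)%:R +
     exp_mistakes L ((x0,yh,yh==y)::h) [seq (x0, z) | z <- s]) by [].
rewrite (eq_bigr (fun y => \sum_yh L h x0 yh * \sum_(s <- allseqs n)
   ((yh != y)%:R + exp_mistakes L ((x0,yh,yh==y)::h) [seq (x0, z) | z <- s]))); last first.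
  move=> y _; rewrite (eq_bigr _ (fun s _ => step y s)) exchange_big.
  by apply: eq_bigr => yh _; rewrite mulr_sumr.
rewrite exchange_big /=.
rewrite (eq_bigr (fun yh => L h x0 yh * ((k%:R - 1) * k%:R^+n +
    k%:R * (n%:R * (k%:R - 1) * k%:R ^+ n / k%:R)))); last first.
  move=> yh _; rewrite -mulr_sumr; congr (_ * _).
  under eq_bigr do rewrite big_split /= IH sum_const_seq.
  rewrite big_split /= -mulr_suml sum_neq sumr_const (_ : #|xpredT| = #|Y|) // -(mulr_natl (_ / _)).
  reflexivity.
rewrite -mulr_suml (proj2 (HL h x0)) mul1r.
rewrite exprS; field.
by rewrite kR.
Qed.

Lemma pigeon (T : eqType) (r : seq T) (F : T -> R) (a : R) :
  (0 < size r)%N -> a * (size r)%:R <= \sum_(s <- r) F s ->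
  exists2 s, s \in r & a <= F s.
Proof.
elim: r => [|x r IH] //= _; rewrite big_cons.
have [Hx|Hx] := lerP a (F x); first by exists x; rewrite ?mem_head.
case: r IH => [|y r] IH.
  by rewrite big_nil /= mulr1 addr0 => H; move: (lt_le_trans Hx H); rewrite ltxx.
move=> H.
have [||s sr Hs] := IH; [by [] | | by exists s => //; rewrite in_cons sr orbT].
move: H; rewrite -natr1 mulrDr mulr1; lra.
Qed.

End Low.


Lemma size_allseqs (Y : finType) n (s : seq Y) : s \in allseqs Y n -> size s = n.
Proof.
elim: n s => [|n IH] s /=; first by rewrite inE => /eqP ->.
case/flattenP => t /mapP [y _ ->] /mapP [s' /IH Hs ->] /=.
by rewrite Hs.
Qed.

Theorem proposition6p2 :
  exists c C : R, 0 < c /\ c <= C /\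
    forall (X : Type) (Y : finType) (r : nat),
      inhabited X -> (2 <= #|Y|)%N ->
      ((c * (#|Y|%:R + r%:R))%:E <= opt_bandit_obl_H (@const_class X Y) r)%E /\
      (opt_bandit_obl_H (@const_class X Y) r <= (C * (#|Y|%:R + r%:R))%:E)%E.
Proof.
exists (1/16), 2; split; first lra; split; first lra.
move=> X Y r [x0] k2.
have k0 : (0 < #|Y|)%N by apply: leq_trans k2.
have kR : (2 : R) <= #|Y|%:R by rewrite ler_nat.
split.
- rewrite /opt_bandit_obl_H /opt_bandit_obl.
  apply: le_ereal_inf_tmp => _ [L HL <-].
  set n := (#|Y|)./2.
  have H1 := @lb_const X Y L HL x0 n [::] finset.set0.
  rewrite cards0 subr0 finset.setC0 -big_enum in H1.
  have Hp1 : (0 < size (enum [set: Y]))%N by rewrite -cardE cardsT.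
  have Hp2 : n%:R * (#|Y|%:R - n%:R) / #|Y|%:R * (size (enum [set: Y]))%:R <=
     \sum_(y <- enum [set: Y]) exp_mistakes L [::] (nseq n (x0, y)).
    rewrite -cardE cardsT mulrAC -mulrA mulfV ?mulr1 //.
    by rewrite pnatr_eq0 -lt0n.
  have [y0 _ Hy0] := @pigeon _ (enum [set: Y])
     (fun y => exp_mistakes L [::] (nseq n (x0, y)))
     (n%:R * (#|Y|%:R - n%:R) / #|Y|%:R) Hp1 Hp2.
  have H2 := @lb_all X Y L HL k0 x0 r [::].
  have Hsz : (size (allseqs Y r))%:R = #|Y|%:R ^+ r :> R by rewrite -sum1_size count1.
  have Hq1 : (0 < size (allseqs Y r))%N by rewrite -(ltr0n R) Hsz exprn_gt0 // ltr0n.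
  have Hq2 : r%:R * (#|Y|%:R - 1) / #|Y|%:R * (size (allseqs Y r))%:R <=
     \sum_(s <- allseqs Y r) exp_mistakes L [::] [seq (x0, y) | y <- s].
    by rewrite Hsz H2 mulrAC.
  have [s sin Hs] := @pigeon _ (allseqs Y r)
     (fun s => exp_mistakes L [::] [seq (x0, y) | y <- s])
     (r%:R * (#|Y|%:R - 1) / #|Y|%:R) Hq1 Hq2.
  set E1 := exp_mistakes L [::] (nseq n (x0, y0)) in Hy0.
  set E2 := exp_mistakes L [::] [seq (x0, y) | y <- s] in Hs.
  have kpos : (0 : R) < #|Y|%:R by lra.
  have E1b : #|Y|%:R / 8 <= E1.
    apply: le_trans Hy0; rewrite ler_pdivlMr //.
    have hk := odd_double_half #|Y|.
    have hkR : #|Y|%:R = (odd #|Y|)%:R + 2 * n%:R :> R.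
      by rewrite -{1}hk natrD -muln2 natrM mulrC.
    have hb : (odd #|Y|)%:R <= 1 :> R by rewrite (_ : 1 = 1%:R) // ler_nat leq_b1.
    have hb0 : 0 <= (odd #|Y|)%:R :> R by rewrite ler0n.
    have hn : 1 <= n%:R :> R.
      rewrite (_ : 1 = 1%:R) // ler_nat /n.
      by case: #|Y| k2 => [|[|m]].
    rewrite hkR; nra.
  have E2b : r%:R / 2 <= E2.
    apply: le_trans Hs; rewrite ler_pdivlMr //.
    have r0 : 0 <= r%:R :> R by rewrite ler0n.
    nra.
  have HS1 : P_r (@const_class X Y) r (nseq n (x0, y0)).
    exists (fun _ => y0); first by exists y0.
    by rewrite count_nseq /= eqxx.
  have HS2 : P_r (@const_class X Y) r [seq (x0, y) | y <- s].
    exists (fun _ => y0); first by exists y0.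
    apply: leq_trans (count_size _ _) _.
    by rewrite size_map (@size_allseqs Y r s sin).
  apply: ereal_sup_ge.
  have [E12|E21] := lerP E2 E1.
  + exists (E1%:E); first by exists (nseq n (x0, y0)).
    rewrite lee_fin; lra.
  + exists (E2%:E); first by exists [seq (x0, y) | y <- s].
    rewrite lee_fin; lra.
- rewrite /opt_bandit_obl_H /opt_bandit_obl.
  apply: ereal_inf_le.
  exists (ereal_sup [set (exp_mistakes (alg X Y) [::] S)%:E | S in P_r (@const_class X Y) r]).
    by exists (alg X Y) => //; exact: (@alg_valid X Y k0).
  apply: ge_ereal_sup => _ [S [f [y0 ->] Hc] <-].
  rewrite lee_fin.
  apply: le_trans (@alg_bound X Y y0 S [::] k0) _.
  rewrite /= natrD natrM.
  have : (count (fun e => y0 != e.2) S)%:R <= r%:R :> R by rewrite ler_nat.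
  rewrite -natr1.
  lra.
Qed.
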